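(* In the pre-cylinder category $\mathcal C^\Delta_0$, for every $n\ge 1$ and $0\le k\le n$, the horn inclusion $\Lambda^n_k\hookrightarrow\Delta_n$ is a trivial cofibration (a monomorphism which belongs to the class of weak equivalences).
   Context: Let $\Delta$ denote the semi-simplicial category: objects the finite nonempty ordinals $[n]=\{0,\dots,n\}$, morphisms the injective order-preserving maps. A finite semi-simplicial set is a presheaf on $\Delta$ with finitely many simplices in total. $\mathcal C^\Delta_0$ is the category of finite semi-simplicial sets, with monomorphisms as cofibrations and with weak equivalences the smallest class $W$ of morphisms which contains all morphisms between representable presheaves $\Delta_m\to\Delta_n$ and makes $\mathcal C^\Delta_0$ a pre-cylinder category, i.e. $W$ contains isomorphisms, is closed under composition, satisfies 2-out-of-6 (if $f,g,h$ are composable with $f\circ g,g\circ h\in W$ then $f,g,h,f\circ g\circ h\in W$), and satisfies the cube lemma (given a natural transformation between spans $B\leftarrow A\to C$ and $B'\leftarrow A'\to C'$ with $A\to B$, $A'\to B'$ monomorphisms and the three components in $W$, the induced map $B\sqcup_AC\to B'\sqcup_{A'}C'$ is in $W$). Here $\Delta_n$ is the representable on $[n]$; $\Lambda^n_k\subset\Delta_n$ is the sub-presheaf of maps $f:[v]\to[n]$ whose image avoids at least one value different from $k$. *)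

(* Defs.v *)
From mathcomp Require Import all_boot.
Set Implicit Arguments. Unset Strict Implicit. Unset Printing Implicit Defensive.

(* A morphism [m] -> [n]: an injective order-preserving map, i.e. a strictly
   increasing map 'I_(m+1) -> 'I_(n+1). *)
Definition incrb m n (f : {ffun 'I_m.+1 -> 'I_n.+1}) : bool :=
  [forall i : 'I_m.+1, forall j : 'I_m.+1, (i < j)%N ==> (f i < f j)%N].

Definition DMap (m n : nat) := {f : {ffun 'I_m.+1 -> 'I_n.+1} | incrb f}.

Lemma did_incr n : incrb [ffun i : 'I_n.+1 => i].
Proof. by apply/forallP=> i; apply/forallP=> j; rewrite !ffunE; apply/implyP. Qed.

Definition did n : DMap n n := exist (@incrb n n) _ (did_incr n).

Lemma dcomp_incr m n p (g : DMap n p) (f : DMap m n) :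
  incrb [ffun i => sval g (sval f i)].
Proof.
case: g => g Hg; case: f => f Hf /=.
move/forallP: Hg => Hg; move/forallP: Hf => Hf.
apply/forallP=> i; apply/forallP=> j; rewrite !ffunE; apply/implyP=> lij.
have := forallP (Hf i) j; rewrite lij /= => lf.
by have := forallP (Hg (f i)) (f j); rewrite lf.
Qed.

Definition dcomp m n p (g : DMap n p) (f : DMap m n) : DMap m p :=
  exist (@incrb m p) _ (dcomp_incr g f).

Lemma dcomp_id_r m n (g : DMap m n) : dcomp g (did m) = g.
Proof. by apply: val_inj; apply/ffunP=> i; rewrite /= !ffunE. Qed.

Lemma dcomp_assoc m n p q (h : DMap p q) (g : DMap n p) (f : DMap m n) :
  dcomp h (dcomp g f) = dcomp (dcomp h g) f.
Proof. by apply: val_inj; apply/ffunP=> i; rewrite /= !ffunE. Qed.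

Lemma DMap_le m n (f : DMap m n) : (m <= n)%N.
Proof.
case: f => f /forallP Hf.
have inj : injective f.
  move=> i j eij; apply/eqP; case: (ltngtP i j) => [lij|lji|/val_inj -> //].
  - by have := forallP (Hf i) j; rewrite lij eij ltnn.
  - by have := forallP (Hf j) i; rewrite lji eij ltnn.
by have := leq_card f inj; rewrite !card_ord.
Qed.

(* Finiteness: finitely many simplices in total, i.e. each X_n finite and
   X_n empty for n large. *)
Record SSet := {
  simp :> nat -> finType;
  face : forall m n, DMap m n -> simp n -> simp m;
  face_id : forall n (x : simp n), face (did n) x = x;
  face_comp : forall m n p (f : DMap m n) (g : DMap n p) (x : simp p),
      face (dcomp g f) x = face f (face g x);
  ss_fin : exists N, forall n, (N <= n)%N -> simp n -> False
}.

Record Hom (X Y : SSet) := {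
  hmap :> forall n, X n -> Y n;
  hnat : forall m n (f : DMap m n) (x : X n),
      hmap (face f x) = face f (hmap x)
}.

Definition hid_ (X : SSet) : Hom X X := @Build_Hom X X (fun n x => x) (fun _ _ _ _ => erefl).

Lemma hcomp_nat (X Y Z : SSet) (g : Hom Y Z) (f : Hom X Y) m n (d : DMap m n) (x : X n) :
  g m (f m (face d x)) = face d (g n (f n x)).
Proof. by rewrite (hnat f) (hnat g). Qed.

Definition hcomp (X Y Z : SSet) (g : Hom Y Z) (f : Hom X Y) : Hom X Z :=
  @Build_Hom X Z (fun n x => g n (f n x)) (hcomp_nat g f).

Definition meq (X Y : SSet) (f g : Hom X Y) : Prop := forall n x, f n x = g n x.

Definition is_mono (X Y : SSet) (f : Hom X Y) : Prop :=
  forall (Z : SSet) (g h : Hom Z X), meq (hcomp f g) (hcomp f h) -> meq g h.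

Definition is_iso (X Y : SSet) (f : Hom X Y) : Prop :=
  exists g : Hom Y X, meq (hcomp g f) (hid_ X) /\ meq (hcomp f g) (hid_ Y).

Definition is_pushout (A B C P : SSet) (i : Hom A B) (j : Hom A C)
    (iB : Hom B P) (iC : Hom C P) : Prop :=
  meq (hcomp iB i) (hcomp iC j) /\
  forall (Z : SSet) (u : Hom B Z) (v : Hom C Z),
    meq (hcomp u i) (hcomp v j) ->
    exists w : Hom P Z,
      [/\ meq (hcomp w iB) u, meq (hcomp w iC) v &
          forall w' : Hom P Z, meq (hcomp w' iB) u -> meq (hcomp w' iC) v -> meq w' w].

Lemma rep_id n m (g : DMap m n) : dcomp g (did m) = g.
Proof. exact: dcomp_id_r. Qed.

Lemma rep_comp n m p q (f : DMap m p) (g : DMap p q) (x : DMap q n) :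
  dcomp x (dcomp g f) = dcomp (dcomp x g) f.
Proof. exact: dcomp_assoc. Qed.

Lemma rep_fin n : exists N, forall m, (N <= m)%N -> DMap m n -> False.
Proof.
exists n.+1 => m lm f; have := DMap_le f.
by move=> lmn; have := leq_trans lm lmn; rewrite ltnn.
Qed.

Definition Rep (n : nat) : SSet :=
  @Build_SSet (fun m => DMap m n) (fun m p f x => dcomp x f)
              (@rep_id n) (@rep_comp n) (rep_fin n).

Definition hornb n (k : 'I_n.+1) v (f : DMap v n) : bool :=
  [exists j : 'I_n.+1, (j != k) && [forall i : 'I_v.+1, sval f i != j]].

Lemma horn_face n (k : 'I_n.+1) m p (d : DMap m p) (x : {f : DMap p n | hornb k f}) :
  hornb k (dcomp (sval x) d).
Proof.
case: x => x Hx /=; case/existsP: Hx => j /andP [jk /forallP Hj].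
apply/existsP; exists j; rewrite jk /=; apply/forallP=> i.
by rewrite ffunE; apply: Hj.
Qed.

Definition horn_facef n (k : 'I_n.+1) m p (d : DMap m p)
  (x : {f : DMap p n | hornb k f}) : {f : DMap m n | hornb k f} :=
  exist (@hornb n k m) _ (horn_face d x).

Lemma horn_id n (k : 'I_n.+1) m (x : {f : DMap m n | hornb k f}) :
  horn_facef (did m) x = x.
Proof. by apply: val_inj; rewrite /= dcomp_id_r. Qed.

Lemma horn_comp n (k : 'I_n.+1) m p q (f : DMap m p) (g : DMap p q)
   (x : {f : DMap q n | hornb k f}) :
  horn_facef (dcomp g f) x = horn_facef f (horn_facef g x).
Proof. by apply: val_inj; rewrite /= dcomp_assoc. Qed.

Lemma horn_fin n (k : 'I_n.+1) :
  exists N, forall m, (N <= m)%N -> {f : DMap m n | hornb k f} -> False.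
Proof.
case: (rep_fin n) => N HN; exists N => m lm x; exact: (HN m lm (sval x)).
Qed.

(* Lambda^n_k : the sub-presheaf of Delta_n of maps f : [v] -> [n] whose
   image avoids at least one value different from k. *)
Definition Horn (n : nat) (k : 'I_n.+1) : SSet :=
  @Build_SSet (fun m => {f : DMap m n | hornb k f}) (@horn_facef n k)
              (@horn_id n k) (@horn_comp n k) (horn_fin k).

Definition horn_incl (n : nat) (k : 'I_n.+1) : Hom (Horn k) (Rep n) :=
  @Build_Hom (Horn k) (Rep n) (fun m x => sval x) (fun _ _ _ _ => erefl).

Definition MorClass := forall X Y : SSet, Hom X Y -> Prop.

(* The axioms of a pre-cylinder category for the class W
   (cofibrations = monomorphisms). *)
Definition precylinder_class (W : MorClass) : Prop :=
  (forall (X Y : SSet) (f : Hom X Y), is_iso f -> W X Y f) /\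
  (forall (X Y Z : SSet) (g : Hom Y Z) (f : Hom X Y),
      W X Y f -> W Y Z g -> W X Z (hcomp g f)) /\
  (forall (X Y Z V : SSet) (h : Hom X Y) (g : Hom Y Z) (f : Hom Z V),
      W Y V (hcomp f g) -> W X Z (hcomp g h) ->
      [/\ W Z V f, W Y Z g, W X Y h & W X V (hcomp f (hcomp g h))]) /\
  (forall (A B C A' B' C' : SSet) (i : Hom A B) (j : Hom A C)
          (i' : Hom A' B') (j' : Hom A' C')
          (a : Hom A A') (b : Hom B B') (c : Hom C C'),
      is_mono i -> is_mono i' ->
      meq (hcomp b i) (hcomp i' a) -> meq (hcomp c j) (hcomp j' a) ->
      W A A' a -> W B B' b -> W C C' c ->
      forall (P : SSet) (iB : Hom B P) (iC : Hom C P),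
      is_pushout i j iB iC ->
      forall (P' : SSet) (iB' : Hom B' P') (iC' : Hom C' P'),
      is_pushout i' j' iB' iC' ->
      forall u : Hom P P',
      meq (hcomp u iB) (hcomp iB' b) -> meq (hcomp u iC) (hcomp iC' c) ->
      W P P' u).

(* W : the smallest class containing all morphisms between representables
   and satisfying the pre-cylinder axioms (intersection of all such classes). *)
Definition weq (X Y : SSet) (f : Hom X Y) : Prop :=
  forall W : MorClass,
    (forall (m n : nat) (g : Hom (Rep m) (Rep n)), W (Rep m) (Rep n) g) ->
    precylinder_class W -> W X Y f.

Definition trivial_cofibration (X Y : SSet) (f : Hom X Y) : Prop :=
  is_mono f /\ weq f.

(* Main.v *)
Require Import Defs.
From mathcomp Require Import all_boot.
From Stdlib Require Import FunctionalExtensionality ProofIrrelevance.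
Set Implicit Arguments. Unset Strict Implicit. Unset Printing Implicit Defensive.

Lemma meq_eq (X Y : SSet) (f g : Hom X Y) : meq f g -> f = g.
Proof.
case: f => f Hf; case: g => g Hg /= H.
have E : f = g.
  apply: functional_extensionality_dep => n.
  apply: functional_extensionality => x; exact: H.
subst g; f_equal; apply: proof_irrelevance.
Qed.

Lemma ltn_bump2 h i j : (bump h i < bump h j) = (i < j).
Proof. by rewrite !ltnNge leq_bump2. Qed.

Lemma delta_incr n (j : 'I_n.+2) : incrb [ffun i : 'I_n.+1 => lift j i].
Proof.
apply/forallP=> i; apply/forallP=> i'; rewrite !ffunE /=; apply/implyP.
by rewrite ltn_bump2.
Qed.
Definition delta n (j : 'I_n.+2) : DMap n n.+1 := exist (@incrb _ _) _ (delta_incr j).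

Definition avoids m n (j : 'I_n.+1) (x : DMap m n) : bool :=
  [forall i, sval x i != j].

Definition sigf m n (j : 'I_n.+2) (x : DMap m n.+1) : {ffun 'I_m.+1 -> 'I_n.+1} :=
  [ffun i => odflt ord0 (unlift j (sval x i))].

Lemma sigf_lift m n (j : 'I_n.+2) (x : DMap m n.+1) i :
  avoids j x -> lift j (sigf j x i) = sval x i.
Proof.
move/forallP/(_ i) => H; rewrite eq_sym in H; rewrite ffunE.
by case: (unlift_some H) => k -> ->.
Qed.

Lemma sig_incr m n (j : 'I_n.+2) (x : DMap m n.+1) :
  avoids j x -> incrb (sigf j x).
Proof.
move=> H; apply/forallP=> i; apply/forallP=> i'; apply/implyP => lt.
rewrite -(ltn_bump2 j) -[bump _ _]/(val (lift j _)) -[bump j (sigf j x i')]/(val (lift j _)).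
rewrite !sigf_lift //.
by case: x H => x /= /forallP Hx _; have := forallP (Hx i) i'; rewrite lt.
Qed.

Definition sigm m n (j : 'I_n.+2) (x : DMap m n.+1) (H : avoids j x) : DMap m n :=
  exist (@incrb _ _) _ (sig_incr H).

Lemma delta_sig m n (j : 'I_n.+2) (x : DMap m n.+1) (H : avoids j x) :
  dcomp (delta j) (sigm H) = x.
Proof. apply: val_inj; apply/ffunP=> i; rewrite /= !ffunE. have := sigf_lift i H. by rewrite ffunE. Qed.

Lemma sig_delta m n (j : 'I_n.+2) (y : DMap m n) (H : avoids j (dcomp (delta j) y)) :
  sigm H = y.
Proof. by apply: val_inj; apply/ffunP=> i; rewrite /= !ffunE liftK. Qed.

Lemma delta_avoids m n (j : 'I_n.+2) (y : DMap m n) : avoids j (dcomp (delta j) y).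
Proof. by apply/forallP=> i; rewrite /= !ffunE eq_sym neq_lift. Qed.

Lemma delta_inj m n (j : 'I_n.+2) (y z : DMap m n) :
  dcomp (delta j) y = dcomp (delta j) z -> y = z.
Proof.
move=> E; apply: val_inj; apply/ffunP => i; apply: (@lift_inj _ j).
by have := congr1 (fun f : DMap m n.+1 => sval f i) E; rewrite /= !ffunE.
Qed.

Definition UJ n (J : {set 'I_n.+1}) m (x : DMap m n) : bool :=
  [exists j in J, avoids j x].

Lemma avoids_face n (j : 'I_n.+1) m p (d : DMap m p) (x : DMap p n) :
  avoids j x -> avoids j (dcomp x d).
Proof. by move/forallP=> H; apply/forallP=> i; rewrite /= ffunE. Qed.

Lemma UJ_face n (J : {set 'I_n.+1}) m p (d : DMap m p) (x : {f : DMap p n | UJ J f}) :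
  UJ J (dcomp (sval x) d).
Proof.
case: x => x /= /existsP [j /andP [jJ Hj]].
by apply/existsP; exists j; rewrite jJ avoids_face.
Qed.

Definition UJ_facef n (J : {set 'I_n.+1}) m p (d : DMap m p)
  (x : {f : DMap p n | UJ J f}) : {f : DMap m n | UJ J f} :=
  exist (@UJ n J m) _ (UJ_face d x).

Lemma UJ_id n (J : {set 'I_n.+1}) m (x : {f : DMap m n | UJ J f}) :
  UJ_facef (did m) x = x.
Proof. by apply: val_inj; rewrite /= dcomp_id_r. Qed.

Lemma UJ_comp n (J : {set 'I_n.+1}) m p q (f : DMap m p) (g : DMap p q)
   (x : {f : DMap q n | UJ J f}) :
  UJ_facef (dcomp g f) x = UJ_facef f (UJ_facef g x).
Proof. by apply: val_inj; rewrite /= dcomp_assoc. Qed.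

Lemma UJ_fin n (J : {set 'I_n.+1}) :
  exists N, forall m, (N <= m)%N -> {f : DMap m n | UJ J f} -> False.
Proof.
case: (rep_fin n) => N HN; exists N => m lm x; exact: (HN m lm (sval x)).
Qed.

Definition SubU n (J : {set 'I_n.+1}) : SSet :=
  @Build_SSet (fun m => {f : DMap m n | UJ J f}) (@UJ_facef n J)
              (@UJ_id n J) (@UJ_comp n J) (UJ_fin J).

Definition inclU n (J : {set 'I_n.+1}) : Hom (SubU J) (Rep n) :=
  @Build_Hom (SubU J) (Rep n) (fun m x => sval x) (fun _ _ _ _ => erefl).

Lemma UJ_sub n (J1 J2 : {set 'I_n.+1}) m (x : DMap m n) :
  J1 \subset J2 -> UJ J1 x -> UJ J2 x.
Proof.
move=> /subsetP S /existsP [j /andP [jJ Hj]].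
by apply/existsP; exists j; rewrite Hj S.
Qed.

Definition inclUUf n (J1 J2 : {set 'I_n.+1}) (S : J1 \subset J2) m (x : SubU J1 m) : SubU J2 m :=
  exist (@UJ n J2 m) (sval x) (UJ_sub S (valP x)).
Lemma inclUU_nat n (J1 J2 : {set 'I_n.+1}) (S : J1 \subset J2) m p (f : DMap m p) (x : SubU J1 p) :
  inclUUf S (face f x) = face f (inclUUf S x).
Proof. by apply: val_inj. Qed.
Definition inclUU n (J1 J2 : {set 'I_n.+1}) (S : J1 \subset J2) : Hom (SubU J1) (SubU J2) :=
  @Build_Hom (SubU J1) (SubU J2) (@inclUUf n J1 J2 S) (@inclUU_nat n J1 J2 S).

Lemma delta_nat n (j : 'I_n.+2) m p (f : DMap m p) (y : DMap p n) :
  dcomp (delta j) (dcomp y f) = dcomp (dcomp (delta j) y) f.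
Proof. exact: dcomp_assoc. Qed.

Definition deltaR n (j : 'I_n.+2) : Hom (Rep n) (Rep n.+1) :=
  @Build_Hom (Rep n) (Rep n.+1) (fun m y => dcomp (delta j) y) (@delta_nat n j).

Lemma UJ_delta n (j : 'I_n.+2) (J : {set 'I_n.+2}) m (y : DMap m n) :
  j \in J -> UJ J (dcomp (delta j) y).
Proof. by move=> jJ; apply/existsP; exists j; rewrite jJ delta_avoids. Qed.

Definition deltaUf n (j : 'I_n.+2) (J : {set 'I_n.+2}) (jJ : j \in J) m (y : Rep n m) : SubU J m :=
  exist (@UJ n.+1 J m) _ (UJ_delta y jJ).
Lemma deltaU_nat n (j : 'I_n.+2) (J : {set 'I_n.+2}) (jJ : j \in J) m p (f : DMap m p) (y : Rep n p) :
  deltaUf jJ (face f y) = face f (deltaUf jJ y).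
Proof. by apply: val_inj; rewrite /= delta_nat. Qed.
Definition deltaU n (j : 'I_n.+2) (J : {set 'I_n.+2}) (jJ : j \in J) : Hom (Rep n) (SubU J) :=
  @Build_Hom (Rep n) (SubU J) (@deltaUf n j J jJ) (@deltaU_nat n j J jJ).

Definition preJ n (j : 'I_n.+2) (J : {set 'I_n.+2}) : {set 'I_n.+1} :=
  [set i | lift j i \in J].

Lemma UJ_pre n (j : 'I_n.+2) (J : {set 'I_n.+2}) m (y : DMap m n) :
  UJ (preJ j J) y -> UJ J (dcomp (delta j) y).
Proof.
case/existsP=> i /andP [iJ /forallP Hi]; apply/existsP; exists (lift j i).
rewrite inE in iJ; rewrite iJ; apply/forallP => t; rewrite /= !ffunE.
by apply: contra (Hi t) => /eqP /lift_inj ->.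
Qed.

Definition deltaUUf n (j : 'I_n.+2) (J : {set 'I_n.+2}) m (y : SubU (preJ j J) m) : SubU J m :=
  exist (@UJ n.+1 J m) _ (UJ_pre (valP y)).
Lemma deltaUU_nat n (j : 'I_n.+2) (J : {set 'I_n.+2}) m p (f : DMap m p) (y : SubU (preJ j J) p) :
  deltaUUf (face f y) = face f (deltaUUf y).
Proof. by apply: val_inj; rewrite /= delta_nat. Qed.
Definition deltaUU n (j : 'I_n.+2) (J : {set 'I_n.+2}) : Hom (SubU (preJ j J)) (SubU J) :=
  @Build_Hom (SubU (preJ j J)) (SubU J) (@deltaUUf n j J) (@deltaUU_nat n j J).

Lemma sigm_irr m n (j : 'I_n.+2) (x y : DMap m n.+1) (H : avoids j x) (H' : avoids j y) :
  x = y -> sigm H = sigm H'.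
Proof. by move=> E; subst y; rewrite (bool_irrelevance H H'). Qed.

Lemma sigm_face m p n (j : 'I_n.+2) (f : DMap m p) (x : DMap p n.+1) (H : avoids j x)
  (H' : avoids j (dcomp x f)) : sigm H' = dcomp (sigm H) f.
Proof.
apply: (@delta_inj _ _ j); rewrite delta_sig dcomp_assoc delta_sig //.
Qed.

Section PO.
Context (n : nat) (j : 'I_n.+2) (J' J : {set 'I_n.+2}) (S : J' \subset J) (jJ : j \in J)
  (HJ : J \subset j |: J') (jJ' : j \notin J').

Lemma avoid_of m (x : DMap m n.+1) : UJ J x -> ~~ UJ J' x -> avoids j x.
Proof.
case/existsP => i /andP [iJ Hi] N.
have := subsetP HJ i iJ; rewrite !inE => /orP [/eqP <- //|iJ'].
by case/negP: N; apply/existsP; exists i; rewrite iJ'.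
Qed.

Lemma pre_of m (x : DMap m n.+1) (H : avoids j x) : UJ J' x -> UJ (preJ j J') (sigm H).
Proof.
case/existsP => i /andP [iJ' /forallP Hi].
have ij : j != i by apply: contraNneq jJ' => ->.
case: (unlift_some ij) => i' Ei _.
apply/existsP; exists i'; rewrite inE -Ei iJ' /=; apply/forallP => t.
apply: contra (Hi t) => /eqP E; rewrite Ei -E.
have := sigf_lift t H; rewrite /sigm /= => ->; by [].
Qed.

Definition wf (Z : SSet) (u : Hom (SubU J') Z) (v : Hom (Rep n) Z) m (x : SubU J m) : Z m :=
  match boolP (UJ J' (sval x)) with
  | AltTrue H => u m (exist _ (sval x) H)
  | AltFalse H => v m (sigm (avoid_of (valP x) H))
  end.

Lemma pushout1 : is_pushout (deltaUU j J') (inclU (preJ j J')) (inclUU S) (deltaU jJ).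
Proof.
split; first by move=> m y; apply: val_inj.
move=> Z u v Huv.
have key : forall m (x : DMap m n.+1) (H : avoids j x) (H1 : UJ J' x),
    u m (exist _ x H1) = v m (sigm H).
  move=> m x H H1.
  have := Huv m (exist _ (sigm H) (pre_of H H1)); rewrite /= => <-.
  by congr (u m _); apply: val_inj; rewrite /= delta_sig.
have wnat : forall m p (f : DMap m p) (x : SubU J p), wf u v (face f x) = face f (wf u v x).
  move=> m p f x; rewrite /wf.
  destruct (boolP (UJ J' (sval (face f x)))) as [H1|H1]; destruct (boolP (UJ J' (sval x))) as [H2|H2].
  - rewrite -hnat; congr (u m _); exact: val_inj.
  - rewrite -hnat /= (key _ _ (avoids_face f (avoid_of (valP x) H2))); congr (v m _); exact: sigm_face.
  - by case/negP: H1; case/existsP: H2 => i /andP [iJ Hi]; apply/existsP; exists i;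
      rewrite iJ avoids_face.
  - rewrite -hnat; congr (v m _); exact: sigm_face.
exists (Build_Hom wnat); split.
- move=> m x /=; rewrite /wf; destruct (boolP (UJ J' (sval (inclUUf S x)))) as [H|H] => /=.
    by congr (u m _); apply: val_inj.
  by case/negP: H; exact: (valP x).
- move=> m y /=; rewrite /wf; destruct (boolP (UJ J' (sval (deltaUf jJ y)))) as [H|H] => /=.
    by rewrite (key _ _ (delta_avoids j y)) sig_delta.
  by rewrite sig_delta.
- move=> w' Hu Hv m x /=; rewrite /wf; destruct (boolP (UJ J' (sval x))) as [H|H].
    rewrite -(Hu m (exist _ (sval x) H)) /=; congr (w' m _); exact: val_inj.
  rewrite -(Hv m) /=; congr (w' m _); apply: val_inj; by rewrite /= delta_sig.
Qed.

End PO.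

Lemma pushout2 n (j : 'I_n.+2) :
  is_pushout (deltaR j) (hid_ (Rep n)) (hid_ (Rep n.+1)) (deltaR j).
Proof.
split; first by [].
move=> Z u v Huv; exists u; split => //.
Qed.

Definition GoodW (W : MorClass) :=
  (forall (m n : nat) (g : Hom (Rep m) (Rep n)), W (Rep m) (Rep n) g) /\ precylinder_class W.

Lemma W_meq W (X Y : SSet) (f g : Hom X Y) : W X Y f -> meq f g -> W X Y g.
Proof. by move=> H /meq_eq <-. Qed.

Lemma is_iso_id (X : SSet) (f : Hom X X) : meq f (hid_ X) -> is_iso f.
Proof. by move=> H; exists (hid_ X); split=> m x /=; rewrite H. Qed.

Lemma UJ1 n (j : 'I_n.+1) m (x : DMap m n) : UJ [set j] x -> avoids j x.
Proof. by case/existsP => i /andP [/set1P -> ]. Qed.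

Definition sigUf n (j : 'I_n.+2) m (x : SubU [set j] m) : Rep n m := sigm (UJ1 (valP x)).
Lemma sigU_nat n (j : 'I_n.+2) m p (f : DMap m p) (x : SubU [set j] p) :
  sigUf (face f x) = face f (sigUf x).
Proof. exact: sigm_face. Qed.
Definition sigU n (j : 'I_n.+2) : Hom (SubU [set j]) (Rep n) :=
  Build_Hom (@sigU_nat n j).

Lemma base W (HW : GoodW W) n (j : 'I_n.+2) : W _ _ (inclU [set j]).
Proof.
case: HW => Hrep [Hiso [Hcomp [H26 _]]].
have jJ : j \in [set j] by rewrite set11.
have := H26 _ _ _ _ (sigU j) (deltaU jJ) (inclU [set j]).
case.
- apply: (@W_meq W _ _ (deltaR j)); first exact: Hrep.
  by move=> m y.
- apply: Hiso; apply: is_iso_id => m x /=; apply: val_inj; exact: delta_sig.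
- by [].
Qed.

Lemma mono_deltaR n (j : 'I_n.+2) : is_mono (deltaR j).
Proof. by move=> Z g h H m x; apply: (@delta_inj _ _ j); exact: H. Qed.

Lemma mono_deltaUU n (j : 'I_n.+2) (J : {set 'I_n.+2}) : is_mono (deltaUU j J).
Proof.
move=> Z g h H m x; apply: val_inj; apply: (@delta_inj _ _ j).
exact: (congr1 sval (H m x)).
Qed.

Lemma claim W (HW : GoodW W) n (J : {set 'I_n.+1}) :
  J != set0 -> J != setT -> W _ _ (inclU J).
Proof.
elim: n J => [|n IHn] J.
  case/set0Pn => i iJ; case/negP; apply/eqP/setP => t.
  by rewrite inE (ord1 t) -(ord1 i) iJ.
have gen : forall c (J : {set 'I_n.+2}), #|J| = c.+1 -> J != setT -> W _ _ (inclU J).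
  elim=> [|c IHc] {}J cJ JT.
    by move/eqP: cJ => /cards1P [j ->]; exact: base.
  have : J != set0 by rewrite -card_gt0 cJ.
  case/set0Pn => j jJ.
  set J' := J :\ j.
  have cJ' : #|J'| = c.+1 by move: cJ; rewrite (cardsD1 j J) jJ add1n => -[].
  have S : J' \subset J by exact: subsetDl.
  have J'T : J' != setT.
    apply: contraNneq JT => E; apply/eqP; apply/setP => t; rewrite inE.
    by apply: (subsetP S); rewrite E inE.
  have WB := IHc J' cJ' J'T.
  have HJ : J \subset j |: J' by rewrite setD1K.
  have jJ' : j \notin J' by rewrite setD11.
  have preN : preJ j J' != set0.
    have : J' != set0 by rewrite -card_gt0 cJ'.
    case/set0Pn => i iJ'.
    have ij : j != i by apply: contraNneq jJ' => ->.
    case: (unlift_some ij) => i' Ei _.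
    by apply/set0Pn; exists i'; rewrite inE -Ei.
  have preT : preJ j J' != setT.
    have : ~~ [forall t, t \in J].
      by apply: contra JT => /forallP H; apply/eqP/setP => t; rewrite inE H.
    rewrite negb_forall => /existsP [t tJ].
    have jt : j != t by apply: contraNneq tJ => <-.
    case: (unlift_some jt) => t' Et _.
    apply/negP => /eqP E; have : t' \in preJ j J' by rewrite E inE.
    rewrite inE -Et => /(subsetP S); by rewrite (negbTE tJ).
  have WA := IHn _ preN preT.
  case: HW => Hrep [Hiso [Hcomp [H26 Hcube]]].
  apply: (Hcube _ _ _ _ _ _ (deltaUU j J') (inclU (preJ j J')) (deltaR j) (hid_ (Rep n))
           (inclU (preJ j J')) (inclU J') (hid_ (Rep n))
           (@mono_deltaUU _ j J') (@mono_deltaR _ j) _ _ WA WB _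
           _ _ _ (pushout1 S jJ HJ jJ') _ _ _ (@pushout2 _ j)).
  - by [].
  - by [].
  - by apply: Hiso; apply: is_iso_id.
  - by [].
  - by [].
move=> J0 JT; have := gen (#|J|.-1) J; apply => //.
by rewrite prednK // card_gt0.
Qed.

Lemma hornUJ n (k : 'I_n.+1) m (x : DMap m n) : hornb k x = UJ [set~ k] x.
Proof. by apply: eq_existsb => t; rewrite in_setC1. Qed.

Definition h2uf n (k : 'I_n.+1) m (x : Horn k m) : SubU [set~ k] m :=
  exist (@UJ n [set~ k] m) (sval x) (etrans (esym (hornUJ k (sval x))) (valP x)).
Lemma h2u_nat n (k : 'I_n.+1) m p (f : DMap m p) (x : Horn k p) :
  h2uf (face f x) = face f (h2uf x).
Proof. exact: val_inj. Qed.
Definition h2u n (k : 'I_n.+1) : Hom (Horn k) (SubU [set~ k]) := Build_Hom (@h2u_nat n k).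

Definition u2hf n (k : 'I_n.+1) m (x : SubU [set~ k] m) : Horn k m :=
  exist (@hornb n k m) (sval x) (etrans (hornUJ k (sval x)) (valP x)).
Lemma u2h_nat n (k : 'I_n.+1) m p (f : DMap m p) (x : SubU [set~ k] p) :
  u2hf (face f x) = face f (u2hf x).
Proof. exact: val_inj. Qed.
Definition u2h n (k : 'I_n.+1) : Hom (SubU [set~ k]) (Horn k) := Build_Hom (@u2h_nat n k).

Theorem mainTheorem17 :
  forall (n : nat) (k : 'I_n.+1), (1 <= n)%N -> trivial_cofibration (@horn_incl n k).
Proof.
move=> n k n1; split.
  by move=> Z g h H m x; apply: val_inj; exact: H.
move=> W Hrep HP.
have HW : GoodW W by split.
case: (HP) => Hiso [Hcomp _].
have J0 : [set~ k] != set0.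
  by rewrite -card_gt0 cardsC1 card_ord.
have JT : [set~ k] != setT.
  by apply/negP => /eqP E; move: (in_setT k); rewrite -E !inE eqxx.
apply: (@W_meq W _ _ (hcomp (inclU [set~ k]) (h2u k))); last by [].
apply: Hcomp; last exact: (claim HW J0 JT).
by apply: Hiso; exists (u2h k); split => m x; apply: val_inj.
Qed.
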